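(* Let $m,n\in\mathbb N$, $M_A=M_m(\mathbb C)$, $M_B=M_n(\mathbb C)$, let $U_A\in M_A$, $U_B\in M_B$ be unitary matrices, and let $\{e_{ij}\}$ be the matrix units of $M_m(\mathbb C)$. For a linear map $\psi:M_A\to M_B$ let $C^U_\psi:=\sum_{i,j=1}^m e_{ij}\otimes\psi(U_Ae_{ij})\in M_A\otimes M_B$ (the Choi $U$-matrix). Then $\psi$ is $(U_A,U_B)$-CP if and only if $C^U_\psi$ is $I_A\otimes U_B$-positive, i.e. $(I_m\otimes U_B^* )C^U_\psi$ is positive semidefinite.
   Context: For $k\in\mathbb N$ and a unitary $U$, write $U^k=\mathrm{diag}(U,\dots,U)$. A linear map $\psi:M_A\to M_B$ is $(U_A,U_B)$-CP if for every $k\in\mathbb N$ and every $V=[V_{ij}]\in M_k(M_A)$ with $(U_A^k)^*V\ge0$, one has $(U_B^k)^*[\psi(V_{ij})]\ge0$. $M_A\otimes M_B$ is identified with block matrices $M_m(M_n(\mathbb C))$. *)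

(* Defs.v *)
From HB Require Import structures.
From mathcomp Require Import all_boot all_order all_algebra.
From mathcomp Require Import sesquilinear spectral.
From mathcomp Require Import complex mxtens.
From mathcomp Require Import reals.

Set Implicit Arguments.
Unset Strict Implicit.
Unset Printing Implicit Defensive.

Import Order.TTheory GRing.Theory Num.Theory.
Local Open Scope ring_scope.
Local Open Scope sesquilinear_scope.

Definition adjmx {C : numClosedFieldType} {p q : nat} (A : 'M[C]_(p, q)) : 'M[C]_(q, p) :=
  A ^t*.

Definition psdmx {C : numClosedFieldType} {p : nat} (A : 'M[C]_p) : Prop :=
  adjmx A = A /\ forall v : 'cV[C]_p, 0 <= (adjmx v *m A *m v) 0 0.

(* The block matrix [V_ij] in M_k(M_p), identified with 'M_(k * p)
   (block (i,j) sits at rows i*p + _, columns j*p + _ ; Kronecker layout of *t). *)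
Definition blockmx {C : numClosedFieldType} {k p : nat}
  (V : 'I_k -> 'I_k -> 'M[C]_p) : 'M[C]_(k * p) :=
  \sum_(i < k) \sum_(j < k) (delta_mx i j *t V i j).

Definition diagk {C : numClosedFieldType} (k : nat) {p : nat} (U : 'M[C]_p) : 'M[C]_(k * p) :=
  (1%:M : 'M[C]_k) *t U.

Definition UCP {C : numClosedFieldType} {m n : nat} (UA : 'M[C]_m) (UB : 'M[C]_n)
  (psi : 'M[C]_m -> 'M[C]_n) : Prop :=
  forall (k : nat) (V : 'I_k -> 'I_k -> 'M[C]_m),
    psdmx (adjmx (diagk k UA) *m blockmx V) ->
    psdmx (adjmx (diagk k UB) *m blockmx (fun i j => psi (V i j))).

Definition choiU {C : numClosedFieldType} {m n : nat} (UA : 'M[C]_m)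
  (psi : 'M[C]_m -> 'M[C]_n) : 'M[C]_(m * n) :=
  \sum_(i < m) \sum_(j < m) (delta_mx i j *t psi (UA *m delta_mx i j)).

(* Main.v *)
Require Import Defs.
From HB Require Import structures.
From mathcomp Require Import all_boot all_order all_algebra.
From mathcomp Require Import sesquilinear spectral.
From mathcomp Require Import complex mxtens.
From mathcomp Require Import reals.
From mathcomp Require Import ring.
Set Implicit Arguments.
Unset Strict Implicit.
Unset Printing Implicit Defensive.
Import Order.TTheory GRing.Theory Num.Theory.
Local Open Scope ring_scope.

Section Helpers.
Variable C : numClosedFieldType.

Lemma adjmxE p q (A : 'M[C]_(p,q)) i j : adjmx A i j = (A j i)^*.
Proof. by rewrite !mxE. Qed.

Lemma adjmxK p q (A : 'M[C]_(p,q)) : adjmx (adjmx A) = A.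
Proof. exact: trmxCK. Qed.

Lemma adjmx_mul p q r (A : 'M[C]_(p,q)) (B : 'M[C]_(q,r)) :
  adjmx (A *m B) = adjmx B *m adjmx A.
Proof. by rewrite /adjmx trmx_mul map_mxM. Qed.

Lemma qfE p (A : 'M[C]_p) (v : 'cV[C]_p) :
  (adjmx v *m A *m v) 0 0 = \sum_X \sum_Y (v X 0)^* * A X Y * v Y 0.
Proof.
rewrite mxE exchange_big; apply: eq_bigr => Y _; rewrite mxE big_distrl.
by apply: eq_bigr => X _; rewrite adjmxE.
Qed.

Lemma psd_congr p q (W : 'M[C]_p) (K : 'M[C]_(p, q)) :
  psdmx W -> psdmx (adjmx K *m W *m K).
Proof.
move=> [HW PW]; split.
  by rewrite !adjmx_mul adjmxK HW mulmxA.
move=> v; have := PW (K *m v).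
by rewrite adjmx_mul !mulmxA.
Qed.

Lemma psd_scale (c : C) p (A : 'M[C]_p) : 0 <= c -> psdmx A -> psdmx (c *: A).
Proof.
move=> c0 [HA PA]; split.
  have hA : forall i j, (A j i)^* = A i j by move=> i j; rewrite -adjmxE HA.
  by apply/matrixP => i j; rewrite adjmxE !mxE rmorphM /= geC0_conj // hA.
move=> v; rewrite -scalemxAr -scalemxAl mxE; exact: mulr_ge0.
Qed.

Lemma psd0 p : psdmx (0 : 'M[C]_p).
Proof.
split; first by apply/matrixP => i j; rewrite adjmxE !mxE rmorph0.
by move=> v; rewrite mulmx0 mul0mx mxE.
Qed.

Lemma psd_add p (A B : 'M[C]_p) : psdmx A -> psdmx B -> psdmx (A + B).
Proof.
move=> [HA PA] [HB PB]; split.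
  have hA : forall i j, (A j i)^* = A i j by move=> i j; rewrite -adjmxE HA.
  have hB : forall i j, (B j i)^* = B i j by move=> i j; rewrite -adjmxE HB.
  by apply/matrixP => i j; rewrite adjmxE !mxE rmorphD /= hA hB.
by move=> v; rewrite mulmxDr mulmxDl mxE; apply: addr_ge0.
Qed.

Lemma psd_sum p N (F : 'I_N -> 'M[C]_p) : (forall l, psdmx (F l)) ->
  psdmx (\sum_(l < N) F l).
Proof.
move=> HF; apply: (big_ind (fun M => psdmx M)) => //; [exact: psd0|exact: psd_add].
Qed.

Lemma sum_tens (V : nmodType) k p (F : 'I_(k * p) -> V) :
  \sum_X F X = \sum_(i < k) \sum_(a < p) F (mxtens_index (i, a)).
Proof.
rewrite pair_big /= (reindex (@mxtens_index k p)) /=; last first.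
  by exists (@mxtens_unindex k p) => x _; rewrite (mxtens_indexK, mxtens_unindexK).
by apply: eq_bigr => -[i a].
Qed.


Lemma blockmxE k p (V : 'I_k -> 'I_k -> 'M[C]_p) i a j b :
  blockmx V (mxtens_index (i, a)) (mxtens_index (j, b)) = V i j a b.
Proof.
rewrite /blockmx summxE (bigD1 i) //= summxE (bigD1 j) //= tensmxE mxE !eqxx mul1r.
rewrite big1 ?addr0; last first.
  by move=> j' /negPf nj; rewrite tensmxE mxE eq_sym nj andbF mul0r.
rewrite big1 ?addr0 // => i' /negPf ni; rewrite summxE big1 // => j' _.
by rewrite tensmxE mxE eq_sym ni mul0r.
Qed.

Lemma blockmx_ext k p (V V' : 'I_k -> 'I_k -> 'M[C]_p) :
  (forall i j, V i j = V' i j) -> blockmx V = blockmx V'.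
Proof.
by move=> H; apply: eq_bigr => i _; apply: eq_bigr => j _; rewrite H.
Qed.

Lemma adj_tens1 k p q (U : 'M[C]_(p, q)) :
  adjmx ((1%:M : 'M[C]_k) *t U) = (1%:M : 'M[C]_k) *t adjmx U.
Proof.
apply/matrixP => X Y; case: (mxtens_indexP X) => i a; case: (mxtens_indexP Y) => j b.
rewrite adjmxE !tensmxE adjmxE !mxE rmorphM /= rmorphMn /= rmorph1 eq_sym.
by [].
Qed.

Lemma adj_diagk k p (U : 'M[C]_p) : adjmx (diagk k U) = diagk k (adjmx U).
Proof. exact: adj_tens1. Qed.

Lemma diagk_mul k p (U : 'M[C]_p) (V : 'I_k -> 'I_k -> 'M[C]_p) :
  diagk k U *m blockmx V = blockmx (fun i j => U *m V i j).
Proof.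
rewrite /diagk /blockmx mulmx_sumr; apply: eq_bigr => i _.
rewrite mulmx_sumr; apply: eq_bigr => j _.
by rewrite tensmx_mul mul1mx.
Qed.

Lemma tens1_mulE k p q N (A : 'M[C]_(q, p)) (W : 'M[C]_(k * p, N)) i r Y :
  (((1%:M : 'M[C]_k) *t A) *m W) (mxtens_index (i, r)) Y =
  \sum_(a < p) A r a * W (mxtens_index (i, a)) Y.
Proof.
rewrite mxE sum_tens (bigD1 i) //= [X in _ + X]big1 ?addr0.
  by apply: eq_bigr => a _; rewrite tensmxE mxE eqxx mul1r.
move=> i' /negPf ni; apply: big1 => a _.
by rewrite tensmxE mxE eq_sym ni mul0r mul0r.
Qed.

Lemma mul_tens1E k p q N (A : 'M[C]_(p, q)) (W : 'M[C]_(N, k * p)) j s X :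
  (W *m ((1%:M : 'M[C]_k) *t A)) X (mxtens_index (j, s)) =
  \sum_(b < p) W X (mxtens_index (j, b)) * A b s.
Proof.
rewrite mxE sum_tens (bigD1 j) //= [X in _ + X]big1 ?addr0.
  by apply: eq_bigr => b _; rewrite tensmxE mxE eqxx mul1r.
move=> j' /negPf nj; apply: big1 => b _.
by rewrite tensmxE mxE nj mul0r mulr0.
Qed.


Lemma congr_entry k p q (M : 'M[C]_(p, q)) (W : 'M[C]_(k * p)) i r j s :
  (adjmx (((1%:M : 'M[C]_k) *t M)) *m W *m ((1%:M : 'M[C]_k) *t M)) (mxtens_index (i, r)) (mxtens_index (j, s))
  = \sum_(a < p) \sum_(b < p) (M a r)^* * W (mxtens_index (i, a)) (mxtens_index (j, b)) * M b s.
Proof.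
rewrite adj_tens1 mul_tens1E.
under eq_bigr => b _ do rewrite tens1_mulE big_distrl.
rewrite exchange_big /=; apply: eq_bigr => a _; apply: eq_bigr => b _.
by rewrite adjmxE.
Qed.

Lemma key k p q (W : 'M[C]_(k * p)) (Cm : 'M[C]_(p * q)) (G : 'M[C]_(k * q)) :
  psdmx W -> psdmx Cm ->
  (forall i r j s, G (mxtens_index (i, r)) (mxtens_index (j, s)) =
     \sum_(a < p) \sum_(b < p) W (mxtens_index (i, a)) (mxtens_index (j, b))
                              * Cm (mxtens_index (a, r)) (mxtens_index (b, s))) ->
  psdmx G.
Proof.
move=> psdW [HC PC] HG.
have Cherm : Cm \is hermsymmx.
  by rewrite is_hermitianmxE expr0 scale1r; rewrite /adjmx in HC; rewrite HC.
set P := spectralmx Cm; set d := spectral_diag Cm.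
have PU : P \is unitarymx := spectral_unitarymx Cm.
have CE : Cm = adjmx P *m diag_mx d *m P.
  have /orthomx_spectralP CE0 := hermitian_normalmx Cherm.
  by rewrite {1}CE0 invmx_unitary.
have CmE : forall X Y, Cm X Y = \sum_l (P l X)^* * d 0 l * P l Y.
  move=> X Y; rewrite [in LHS]CE mul_mx_diag mxE; apply: eq_bigr => l _.
  by rewrite !mxE.
have d0 : forall l, 0 <= d 0 l.
  move=> l.
  have E : row l P *m adjmx P = delta_mx 0 l by rewrite -row_mul (unitarymxP PU) row1.
  have := PC (adjmx (row l P)); rewrite adjmxK [X in row l P *m X]CE.
  have -> : row l P *m (adjmx P *m diag_mx d *m P) *m adjmx (row l P) =
            delta_mx 0 l *m diag_mx d *m adjmx (delta_mx 0 l).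
    by rewrite -E !adjmx_mul adjmxK !mulmxA.
  rewrite mul_mx_diag mxE (bigD1 l) //= [X in _ + X]big1 ?addr0.
    by rewrite !mxE !eqxx mul1r rmorph1 mulr1.
  by move=> l' /negPf nl; rewrite !mxE nl mul0r mul0r.
pose M l := \matrix_(a < p, r < q) P l (mxtens_index (a, r)).
have GE : G = \sum_l d 0 l *: (adjmx (((1%:M : 'M[C]_k) *t M l)) *m W *m ((1%:M : 'M[C]_k) *t M l)).
  apply/matrixP => X Y; case: (mxtens_indexP X) => i r; case: (mxtens_indexP Y) => j s.
  rewrite HG summxE.
  under [RHS]eq_bigr => l _ do rewrite mxE congr_entry mulr_sumr.
  rewrite [RHS]exchange_big /=; apply: eq_bigr => a _.
  under [RHS]eq_bigr => l _ do rewrite mulr_sumr.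
  rewrite [RHS]exchange_big /=; apply: eq_bigr => b _.
  rewrite CmE mulr_sumr; apply: eq_bigr => l _.
  rewrite !mxE.
  ring.
rewrite GE; apply: psd_sum => l; apply: psd_scale => //; exact: psd_congr.
Qed.


Lemma psd1 : psdmx (1%:M : 'M[C]_1).
Proof.
split.
  by apply/matrixP => i j; rewrite adjmxE !mxE rmorphMn /= rmorph1 eq_sym.
move=> v; rewrite qfE !big_ord1 mxE eqxx mulr1 mulrC; exact: mul_conjC_ge0.
Qed.

Lemma psd_blockdelta m : psdmx (blockmx (fun i j : 'I_m => (delta_mx i j : 'M[C]_m))).
Proof.
pose u : 'M[C]_(1, m * m) :=
  \row_X (((@mxtens_unindex m m X).1 == (@mxtens_unindex m m X).2)%:R).
have -> : blockmx (fun i j : 'I_m => (delta_mx i j : 'M[C]_m)) = adjmx u *m 1%:M *m u.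
  apply/matrixP => X Y; case: (mxtens_indexP X) => i a; case: (mxtens_indexP Y) => j b.
  rewrite blockmxE mulmx1 [RHS]mxE big_ord1 adjmxE !mxE !mxtens_indexK /=.
  by rewrite conjC_nat -natrM mulnb [a == i]eq_sym [b == j]eq_sym.
exact: psd_congr psd1.
Qed.

End Helpers.

Lemma choiU_blockmx (C : numClosedFieldType) m n (UA : 'M[C]_m) (psi : 'M[C]_m -> 'M[C]_n) :
  choiU UA psi = blockmx (fun i j => psi (UA *m delta_mx i j)).
Proof. by []. Qed.

Theorem theorem3p4 (R : realType) (m n : nat)
  (UA : 'M[R[i]]_m) (UB : 'M[R[i]]_n)
  (hUA : UA \is unitarymx) (hUB : UB \is unitarymx)
  (psi : {linear 'M[R[i]]_m -> 'M[R[i]]_n}) :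
  UCP UA UB psi <->
  psdmx ((1%:M : 'M[R[i]]_m) *t adjmx UB *m choiU UA psi).
Proof.
have UAU : adjmx UA *m UA = 1%:M by apply: mulmx1C; apply/unitarymxP.
split.
  move=> H.
  suff Hpre : psdmx (adjmx (diagk m UA) *m blockmx (fun i j => UA *m delta_mx i j)).
    by have := H m _ Hpre; rewrite adj_diagk.
  rewrite adj_diagk diagk_mul (@blockmx_ext _ _ _ _ (fun i j => delta_mx i j)).
    exact: psd_blockdelta.
  by move=> i j; rewrite mulmxA UAU mul1mx.
move=> HC k V HV.
apply: (key HV HC) => i r j s.
rewrite !adj_diagk !diagk_mul.
rewrite blockmxE.
under eq_bigr => a _ do under eq_bigr => b _ do rewrite !blockmxE.
have VE : V i j = UA *m (adjmx UA *m V i j).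
  by rewrite mulmxA (unitarymxP hUA) mul1mx.
rewrite {1}VE [in LHS](matrix_sum_delta (adjmx UA *m V i j)).
rewrite mulmx_sumr linear_sum mulmx_sumr summxE; apply: eq_bigr => a _.
rewrite mulmx_sumr linear_sum mulmx_sumr summxE; apply: eq_bigr => b _.
by rewrite -scalemxAr linearZ /= -scalemxAr mxE.
Qed.
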